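(* Consider SALIQUOT. Then $\mathcal{SG}(0)=0$. Suppose that $n>0$ and let $n=2^{k}m$, where $2\nmid m$ and $k\ge 0$. Then $\mathcal{SG}(n)= v(n)+1=k+1$.
   Context: SALIQUOT is the impartial normal-play game on the nonnegative integers where from $n$ a player subtracts a positive divisor of $n$, i.e. $\mathrm{opt}(n)=\{n-d: d\mid n,\ d>0\}$ (so $0$ has no options); the player unable to move loses. $\mathcal{SG}$ denotes the Sprague-Grundy value, defined by the mex rule. $v(n)$ is the 2-adic valuation of $n$. *)

(* Defs.v *)
From mathcomp Require Import all_boot.

Set Implicit Arguments. Unset Strict Implicit. Unset Printing Implicit Defensive.

Definition saliquot_opts (n : nat) : seq nat :=
  [seq n - d | d <- iota 1 n & d %| n].

Definition mex (s : seq nat) : nat := find (fun i => i \notin s) (iota 0 (size s).+1).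

(* Sprague-Grundy value, by recursion with fuel (all options of n are < n
   when n > 0, and 0 has no options, so fuel n.+1 suffices) *)
Fixpoint sg_fuel (fuel n : nat) : nat :=
  match fuel with
  | 0 => 0
  | f.+1 => mex [seq sg_fuel f m | m <- saliquot_opts n]
  end.

Definition SG (n : nat) : nat := sg_fuel n.+1 n.

Definition v2 (n : nat) : nat := logn 2 n.

(* Main.v *)
Require Import Defs.
From mathcomp Require Import all_boot.

Lemma find_iota_eq (p : pred nat) N x :
  x < N -> p x -> (forall i, i < x -> ~~ p i) -> find p (iota 0 N) = x.
Proof.
move=> xN px hi.
have hp : has p (iota 0 N) by apply/hasP; exists x => //; rewrite mem_iota.
have lt := hp; rewrite has_find size_iota in lt.
have := nth_find 0 hp; rewrite nth_iota // add0n => pf.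
case: (ltngtP (find p (iota 0 N)) x) => // h.
- by move: (hi _ h); rewrite pf.
- by move: (before_find 0 h); rewrite nth_iota ?add0n ?px // (ltn_trans h lt).
Qed.

Lemma mex_eq s x : (forall i, i < x -> i \in s) -> x \notin s -> mex s = x.
Proof.
move=> hi hx; rewrite /mex; apply: find_iota_eq => //.
- rewrite ltnS -(size_iota 0 x); apply: uniq_leq_size; first exact: iota_uniq.
  by move=> i; rewrite mem_iota add0n => /hi.
- by move=> i /hi ->.
Qed.

Lemma logn2_odd j o : odd o -> logn 2 (2 ^ j * o) = j.
Proof.
move=> oo; have o0 : 0 < o by case: o oo.
rewrite lognM ?expn_gt0 // pfactorK // logn_coprime ?addn0 //.
by rewrite coprime2n.
Qed.

Lemma opts_mem n m : (m \in saliquot_opts n) = [exists d : 'I_n.+1, [&& 0 < (d:nat), d %| n & m == n - d]].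
Proof.
apply/idP/existsP.
- case/mapP => d; rewrite mem_filter mem_iota => /andP [dn /andP [d1 d2]] ->.
  have dn1 : d < n.+1 by rewrite add1n in d2.
  by exists (Ordinal dn1) => /=; rewrite d1 dn eqxx.
- case=> d /and3P [d0 dn /eqP ->]; apply/mapP; exists (d : nat) => //.
  by rewrite mem_filter mem_iota dn d0 add1n ltn_ord.
Qed.

Definition g n := if n == 0 then 0 else (logn 2 n).+1.

Lemma opt_lt n m : m \in saliquot_opts n -> m < n.
Proof.
rewrite opts_mem => /existsP [d /and3P [d0 dn /eqP ->]].
have n0 : 0 < n by apply: leq_trans d0 _; rewrite -ltnS ltn_ord.
by rewrite ltn_subrL d0.
Qed.

Lemma opt_a k a m : odd a -> m \in saliquot_opts (2 ^ k * a) -> 0 < m -> logn 2 m != k.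
Proof.
move=> oa; rewrite opts_mem => /existsP [[d dlt] /= /and3P [d0 dn /eqP ->]] m0.
set n := 2 ^ k * a in dlt dn m0 *.
have dln : d <= n by rewrite -ltnS.
have hk : 2 ^ k %| n by apply: dvdn_mulr.
case: (boolP (2 ^ k %| d)) => hd.
- have [b db] : exists b, d = 2 ^ k * b by exists (d %/ 2 ^ k); rewrite mulnC divnK.
  rewrite db in dn dln m0 *.
  have ba : b %| a by rewrite /n dvdn_pmul2l ?expn_gt0 in dn.
  have ob : odd b.
    by apply: contraTT oa; rewrite -!dvdn2 => h; apply: dvdn_trans h ba.
  have bla : b <= a by rewrite /n leq_pmul2l ?expn_gt0 in dln.
  rewrite /n -mulnBr.
  have ev : 2 %| a - b by rewrite dvdn2 oddB // oa ob.
  have : 2 ^ k.+1 %| 2 ^ k * (a - b) by rewrite expnSr dvdn_pmul2l ?expn_gt0.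
  rewrite pfactor_dvdn //; last by rewrite /n -mulnBr in m0.
  by move=> h; apply/eqP => e; rewrite e ltnn in h.
- have : ~~ (2 ^ k %| n - d) by rewrite dvdn_subr.
  rewrite pfactor_dvdn // => h; apply/eqP => e; by rewrite e leqnn in h.
Qed.

Lemma opt_b k a j : odd a -> j < k ->
  exists2 m, m \in saliquot_opts (2 ^ k * a) & 0 < m /\ logn 2 m = j.
Proof.
move=> oa jk; have a0 : 0 < a by case: a oa.
have ek : 2 ^ k = 2 ^ j * 2 ^ (k - j) by rewrite -expnD subnKC // ltnW.
exists (2 ^ k * a - 2 ^ j * a).
  rewrite opts_mem; apply/existsP.
  have hd : 2 ^ j * a < (2 ^ k * a).+1.
    by rewrite ltnS leq_pmul2r // leq_pexp2l // ltnW.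
  exists (Ordinal hd) => /=; rewrite muln_gt0 expn_gt0 a0 /= eqxx andbT.
  by rewrite ek mulnAC dvdn_mulr.
have e : 2 ^ k * a - 2 ^ j * a = 2 ^ j * ((2 ^ (k - j) - 1) * a).
  by rewrite ek mulnBl mul1n mulnBr !mulnA.
have p0 : 0 < 2 ^ (k - j) - 1.
  by rewrite subn_gt0 -{1}(expn0 2) ltn_exp2l // subn_gt0.
rewrite e; split; first by rewrite !muln_gt0 expn_gt0 p0 a0.
apply: logn2_odd; rewrite oddM oa andbT oddB ?expn_gt0 // oddX /=.
by rewrite orbF subn_eq0 leqNgt jk.
Qed.

Lemma sg_fuel_g f n : n < f -> sg_fuel f n = g n.
Proof.
elim: f n => [|f IH] n // nf /=.
have -> : [seq sg_fuel f m | m <- saliquot_opts n] = [seq g m | m <- saliquot_opts n].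
  by apply/eq_in_map => m /opt_lt mn; apply: IH; apply: leq_trans mn nf.
case: (posnP n) => [->|n0]; first by [].
have [a oa ->] : exists2 a, odd a & n = 2 ^ (logn 2 n) * a.
  case: (pfactor_coprime (isT : prime 2) n0) => a ca e.
  by exists a; [rewrite -coprime2n | rewrite mulnC].
set k := logn 2 n.
have a0 : 0 < a by move: oa; case: (a).
have gn : g (2 ^ k * a) = k.+1.
  rewrite /g; have -> : (2 ^ k * a == 0) = false by rewrite eqn0Ngt muln_gt0 expn_gt0 a0.
  by rewrite logn2_odd.
rewrite gn; apply: mex_eq.
- case=> [|i] ik.
  + apply/mapP; exists 0 => //; rewrite opts_mem; apply/existsP.
    exists ord_max; rewrite /= subnn eqxx dvdnn andbT.
    by rewrite muln_gt0 expn_gt0 a0.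
  + have [m hm [m0 lm]] := opt_b k a i oa ik.
    by apply/mapP; exists m => //; rewrite /g eqn0Ngt m0 lm.
- apply/mapP => [[m hm]]; rewrite /g; case: eqP => // /eqP m0 [e].
  by move: (opt_a k a m oa hm); rewrite lt0n m0 -e eqxx => /(_ isT).
Qed.

Theorem mainTheorem2 :
  SG 0 = 0 /\
  (forall n k m : nat, 0 < n -> ~~ (2 %| m) -> n = 2 ^ k * m ->
     SG n = v2 n + 1 /\ SG n = k + 1).
Proof.
split; first by [].
move=> n k m n0 hm e; rewrite /SG sg_fuel_g // /g eqn0Ngt n0 /v2 addn1; split => //.
by rewrite dvdn2 negbK in hm; rewrite /= e logn2_odd // addn1.
Qed.
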